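(* Let $d\ge 1$ and consider the filtered ring $\mathbf{Z}[x]/(x^3)$ with $x$ in filtration exactly $d$. Let $R$ be a filtered $\lambda$-ring structure on it. Then $R$ is isomorphic to one of the following filtered $\lambda$-rings: (1) $S((c_p))$, the filtered $\lambda$-ring structure with Adams operations $\psi^p(x)=c_px^2$ for all primes $p$, where $c_2\equiv 1\pmod 2$ and $c_p\equiv 0\pmod p$ for $p>2$. Moreover, every such sequence $(c_p)$ gives a filtered $\lambda$-ring structure on $\mathbf{Z}[x]/(x^3)$, and $S((c_p))\cong S((c'_p))$ if and only if $(c_p)=\pm(c'_p)$. (2) $S((b_p),k)$, the filtered $\lambda$-ring structure with Adams operations $\psi^p(x)=b_px+c_px^2$ for all primes $p$, where $(b_p)$ satisfies condition (A) and the $c_p$ are of the following form: letting $p_1,\ldots,p_m$ be the list of all odd primes satisfying condition (B) for $(b_p)$, and $G=\gcd(b_p(b_p-1)\colon p \text{ prime})$, there is an odd integer $k$ with $1\le k\le G/2$, $k\equiv 0\pmod{p_1\cdots p_m}$ (an empty condition if there are no such primes), and $c_p=kb_p(b_p-1)/G$ for all primes $p$. Moreover, every such pair $((b_p),k)$ gives a filtered $\lambda$-ring structure on $\mathbf{Z}[x]/(x^3)$, and $S((b_p),k)\cong S((b'_p),k')$ if and only if $b_p=b'_p$ for all primes $p$ and $k=k'$. Finally, no $S((c_p))$ is isomorphic to any $S((b_p),k)$.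
   Context: A (special) $\lambda$-ring is a commutative ring with operations $\lambda^i$ satisfying the Atiyah–Tall axioms; a filtered $\lambda$-ring is a $\lambda$-ring with a decreasing filtration by ideals $R=I^0\supseteq I^1\supseteq\cdots$ each closed under $\lambda^i$, $i\ge1$; morphisms are filtration-preserving $\lambda$-ring maps. Every $\lambda$-ring has Adams operations $\psi^k$ (ring endomorphisms defined by the Newton formula). The filtered ring $\mathbf{Z}[x]/(x^n)$ with $x$ in filtration exactly $d$ has $I^k$ equal to the ideal generated by the $x^j$ with $jd\ge k$. A filtered $\lambda$-ring structure on it is determined by the polynomials $\psi^p(x)$ ($p$ prime), which have zero constant term; conversely a family of polynomials without constant term defines (the Adams operations of) a filtered $\lambda$-ring structure iff $\psi^p(\psi^q(x))=\psi^q(\psi^p(x))$ and $\psi^p(x)\equiv x^p \pmod p$ for all primes $p,q$. For a prime $p$ and integer $m$, $\theta_p(m)$ is the largest integer with $p^{\theta_p(m)}\mid m$, and $\theta_p(0)=-\infty$. A sequence of integers $(b_p)$ indexed by the primes satisfies condition (A) if $b_2\ne0$, $b_p\equiv0\pmod p$ for all primes $p$, and $b_p(b_p-1)\equiv0\pmod{2^{\theta_2(b_2)}}$ for all odd primes $p$. Given such $(b_p)$, an odd prime $p$ satisfies condition (B) if $b_p\ne0$ and $\theta_p(b_p)=\min\{\theta_p(b_q(b_q-1))\colon q \text{ prime}, b_q\ne0\}$. *)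

(* Defs.v *)
From mathcomp Require Import all_boot all_order all_algebra.
Set Implicit Arguments. Unset Strict Implicit. Unset Printing Implicit Defensive.
Import Order.TTheory GRing.Theory Num.Theory.
Local Open Scope ring_scope.

(* Elements of Z[x]/(x^3) are represented by their canonical representatives:
   integer polynomials of size <= 3 (degree <= 2).  [trunc3] is reduction
   modulo x^3. *)
Definition trunc3 (f : {poly int}) : {poly int} := take_poly 3 f.

(* The filtration of Z[x]/(x^3) with x in filtration exactly d:
   I^k = ideal generated by the x^j with j*d >= k.  A reduced element
   a0 + a1 x + a2 x^2 lies in I^k iff a_j = 0 whenever j*d < k. *)
Definition in_filt (d k : nat) (f : {poly int}) : Prop :=
  forall j : nat, (j * d < k)%N -> f`_j = 0.

(* A family psi : nat -> {poly int}, where psi p represents psi^p(x) for p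
   prime (values at non-primes are irrelevant), gives (the Adams operations
   of) a filtered lambda-ring structure on Z[x]/(x^3) iff each psi^p(x) is an
   element without constant term, psi^p(psi^q(x)) = psi^q(psi^p(x)), and
   psi^p(x) = x^p mod p. Here psi^p(psi^q(x)) = (psi q)(psi p (x)) since
   psi^p is a ring endomorphism. *)
Definition is_filt_lambda (psi : nat -> {poly int}) : Prop :=
  (forall p, prime p -> (size (psi p) <= 3)%N /\ (psi p)`_0 = 0) /\
  (forall p q, prime p -> prime q ->
     trunc3 ((psi q) \Po (psi p)) = trunc3 ((psi p) \Po (psi q))) /\
  (forall p, prime p -> forall i, (i < 3)%N ->
     (p%:Z %| (psi p - 'X^p)`_i)%Z).

(* The ring endomorphism of Z[x]/(x^3) sending x to g is f |-> trunc3 (f \Po g).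
   It preserves the filtration iff it maps each I^k into I^k. *)
Definition filt_preserving (d : nat) (g : {poly int}) : Prop :=
  forall (k : nat) (f : {poly int}), (size f <= 3)%N -> in_filt d k f ->
    in_filt d k (trunc3 (f \Po g)).

(* Isomorphism of filtered lambda-ring structures psi1 -> psi2 on Z[x]/(x^3):
   a ring automorphism phi (x |-> g) with inverse (x |-> h), both filtration
   preserving, commuting with the Adams operations:
   phi(psi1^p(x)) = psi2^p(phi(x)). *)
Definition flr_iso (d : nat) (psi1 psi2 : nat -> {poly int}) : Prop :=
  exists g h : {poly int},
    (size g <= 3)%N /\ (size h <= 3)%N /\
    trunc3 (g \Po h) = 'X /\ trunc3 (h \Po g) = 'X /\
    filt_preserving d g /\ filt_preserving d h /\
    (forall p, prime p -> trunc3 ((psi1 p) \Po g) = trunc3 (g \Po (psi2 p))).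

Definition theta (p : nat) (m : int) : nat := logn p `|m|%N.

Definition condC (c : nat -> int) : Prop :=
  ~~ (2%:Z %| c 2%N)%Z /\ (forall p, prime p -> (2 < p)%N -> (p%:Z %| c p)%Z).

Definition condA (b : nat -> int) : Prop :=
  [/\ b 2 != 0,
      (forall p, prime p -> (p%:Z %| b p)%Z) &
      (forall p, prime p -> odd p ->
         ((2 ^ theta 2%N (b 2%N))%:Z %| b p * (b p - 1))%Z)].

Definition condB (b : nat -> int) (p : nat) : Prop :=
  b p != 0 /\
  (forall q, prime q -> b q != 0 -> (theta p (b p) <= theta p (b q * (b q - 1)))%N) /\
  (exists q, [/\ prime q, b q != 0 & theta p (b p) = theta p (b q * (b q - 1))]).

Definition is_gcd_all (b : nat -> int) (G : int) : Prop :=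
  [/\ 0 <= G,
      (forall p, prime p -> (G %| b p * (b p - 1))%Z) &
      (forall e : int, (forall p, prime p -> (e %| b p * (b p - 1))%Z) -> (e %| G)%Z)].

(* Conditions on k: odd, 1 <= k <= G/2, divisible by the product p_1...p_m of
   all odd primes satisfying (B) (equivalently: by each of them). *)
Definition condK (b : nat -> int) (G k : int) : Prop :=
  [/\ ~~ (2%:Z %| k)%Z, 1 <= k, 2 * k <= G &
      (forall p, prime p -> odd p -> condB b p -> (p%:Z %| k)%Z)].

Definition S_c (c : nat -> int) : nat -> {poly int} :=
  fun p => (c p)%:P * 'X^2.

Definition S_bk (b : nat -> int) (k G : int) : nat -> {poly int} :=
  fun p => (b p)%:P * 'X + (divz (k * (b p * (b p - 1))) G)%:P * 'X^2.

(* Main.v *)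
Require Import Defs.
From mathcomp Require Import all_boot all_order all_algebra.
From mathcomp Require Import zify ring.
From Stdlib Require Import ClassicalEpsilon.
Import Order.TTheory GRing.Theory Num.Theory.
Local Open Scope ring_scope.

Lemma poly3 (f : {poly int}) : (size f <= 3)%N ->
  f = (f`_0)%:P + f`_1 *: 'X + f`_2 *: ('X * 'X).
Proof.
move=> hf; apply/polyP => i.
rewrite !coefD !coefZ coefC -expr2 coefX coefXn.
case: i => [|[|[|i]]] /=; rewrite ?mulr0 ?mulr1 ?addr0 ?add0r //.
by rewrite nth_default //; apply: leq_trans hf _.
Qed.

Lemma eq3 (f g : {poly int}) : (size f <= 3)%N -> (size g <= 3)%N ->
  f`_0 = g`_0 -> f`_1 = g`_1 -> f`_2 = g`_2 -> f = g.
Proof.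
by move=> hf hg h0 h1 h2; rewrite (poly3 _ hf) (poly3 _ hg) h0 h1 h2.
Qed.

Lemma size_tr3 f : (size (trunc3 f) <= 3)%N.
Proof. exact: size_take_poly. Qed.

Lemma tr3_coef (f : {poly int}) i : (i < 3)%N -> (trunc3 f)`_i = f`_i.
Proof. by move=> hi; rewrite /trunc3 coef_take_poly hi. Qed.

Lemma tr3_comp (f g : {poly int}) : (size f <= 3)%N -> g`_0 = 0 ->
  [/\ (trunc3 (f \Po g))`_0 = f`_0, (trunc3 (f \Po g))`_1 = f`_1 * g`_1 &
      (trunc3 (f \Po g))`_2 = f`_1 * g`_2 + f`_2 * (g`_1 * g`_1)].
Proof.
move=> hf hg0; rewrite !tr3_coef //.
have -> : f \Po g = (f`_0)%:P + f`_1 *: g + f`_2 *: (g * g).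
  by rewrite {1}(poly3 _ hf) !comp_polyD !comp_polyZ comp_polyM comp_polyC comp_polyX.
rewrite !coefD !coefZ !coefC !coefM !big_ord_recr !big_ord0 /= hg0.
split; ring.
Qed.
Arguments tr3_comp {f g}.

Lemma fp_X0 d (g : {poly int}) : (1 <= d)%N -> filt_preserving d g -> g`_0 = 0.
Proof.
move=> hd hg.
have h := hg 1%N 'X.
have hX : (size ('X : {poly int}) <= 3)%N by rewrite size_polyX.
have hin : in_filt d 1 'X.
  by move=> [|j] hj; [rewrite coefX | rewrite mulSn in hj; lia].
have := h hX hin 0%N (isT : (0 * d < 1)%N).
by rewrite comp_polyX tr3_coef.
Qed.

Arguments fp_X0 {d g}.

Lemma fp_of d (g : {poly int}) : (size g <= 3)%N -> g`_0 = 0 -> filt_preserving d g.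
Proof.
move=> hs h0 k f hf hin j hj.
case: (ltnP j 3) => hj3; last by rewrite /trunc3 coef_take_poly ltnNge hj3.
have [e0 e1 e2] := tr3_comp hf h0.
case: j hj hj3 => [|[|[|j]]] hj hj3 //.
- by rewrite e0 (hin 0%N hj).
- by rewrite e1 (hin 1%N hj) mul0r.
- rewrite e2 (hin 2%N hj) (hin 1%N); first by rewrite !mul0r addr0.
  lia.
Qed.

Lemma size_le3 (f : {poly int}) : (forall i, (3 <= i)%N -> f`_i = 0) -> (size f <= 3)%N.
Proof. by move=> h; apply/leq_sizeP. Qed.

Definition good (psi : nat -> {poly int}) :=
  forall p, prime p -> (size (psi p) <= 3)%N /\ (psi p)`_0 = 0.

Lemma unit_int (a b : int) : a * b = 1 -> a = 1 \/ a = -1.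
Proof.
move=> h; have : a \is a GRing.unit.
  by apply/unitrP; exists b; split => //; rewrite mulrC.
move=> U; lia.
Qed.

Lemma iso_elim d psi1 psi2 : (1 <= d)%N -> good psi1 -> good psi2 -> flr_iso d psi1 psi2 ->
  exists u v : int, (u = 1 \/ u = -1) /\ forall p, prime p ->
    (psi1 p)`_1 = (psi2 p)`_1 /\
    (psi1 p)`_2 = u * (psi2 p)`_2 + v * ((psi1 p)`_1 * (psi1 p)`_1 - (psi1 p)`_1).
Proof.
move=> hd g1 g2 [g [h [sg [sh [gh [hg [fg [fh hc]]]]]]]].
have g0 := fp_X0 hd fg; have h0 := fp_X0 hd fh.
have [_ e1 _] := tr3_comp sg h0.
rewrite gh coefX /= in e1.
have hu := unit_int _ _ (esym e1).
exists g`_1, g`_2; split => // p hp.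
have [s1 z1] := g1 p hp; have [s2 z2] := g2 p hp.
have := hc p hp.
have [_ a1 a2] := tr3_comp s1 g0.
have [_ b1 b2] := tr3_comp sg z2.
move=> E; have F1 := congr1 (fun q : {poly int} => q`_1) E; have F2 := congr1 (fun q : {poly int} => q`_2) E.
rewrite /= a1 b1 in F1; rewrite /= a2 b2 in F2.
case: hu => U; rewrite U in F1 F2 *; nia.
Qed.

Lemma iso_intro d psi1 psi2 (u v : int) : good psi1 -> good psi2 -> (u = 1 \/ u = -1) ->
  (forall p, prime p ->
    (psi1 p)`_1 = (psi2 p)`_1 /\
    (psi1 p)`_2 = u * (psi2 p)`_2 + v * ((psi1 p)`_1 * (psi1 p)`_1 - (psi1 p)`_1)) ->
  flr_iso d psi1 psi2.
Proof.
move=> g1 g2 hu hp.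
pose g : {poly int} := Poly [:: 0; u; v].
pose h : {poly int} := Poly [:: 0; u; - (u * v)].
have sg : (size g <= 3)%N by apply: size_le3 => i hi; rewrite coef_Poly nth_default.
have sh : (size h <= 3)%N by apply: size_le3 => i hi; rewrite coef_Poly nth_default.
have g0 : g`_0 = 0 by rewrite coef_Poly.
have h0 : h`_0 = 0 by rewrite coef_Poly.
exists g, h; do 2 (split; first by []).
split.
  have [e0 e1 e2] := tr3_comp sg h0.
  apply: eq3 => //; first exact: size_tr3; first by rewrite size_polyX.
  + by rewrite e0 g0 coefX.
  + rewrite e1 coefX !coef_Poly /=; case: hu => ->; lia.
  + rewrite e2 coefX !coef_Poly /=; case: hu => ->; lia.
split.
- have [e0 e1 e2] := tr3_comp sh g0.
  apply: eq3 => //; first exact: size_tr3; first by rewrite size_polyX.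
  + by rewrite e0 h0 coefX.
  + rewrite e1 coefX !coef_Poly /=; case: hu => ->; lia.
  + rewrite e2 coefX !coef_Poly /=; case: hu => ->; lia.
split; first exact: fp_of.
split; first exact: fp_of.
- move=> p pp.
  have [s1 z1] := g1 p pp; have [s2 z2] := g2 p pp.
  have [hb hc] := hp p pp.
  have [a0 a1 a2] := tr3_comp s1 g0.
  have [b0 b1 b2] := tr3_comp sg z2.
  apply: eq3; try exact: size_tr3.
  + by rewrite a0 b0 z1 g0.
  + rewrite a1 b1 !coef_Poly /= hb; ring.
  + rewrite a2 b2 !coef_Poly /= hc -hb; case: hu => ->; ring.
Qed.

Notation bb psi p := ((psi p)`_1).
Notation cc psi p := ((psi p)`_2).

Lemma coefXp_sub (f : {poly int}) p i : (f - 'X^p)`_i = f`_i - (i == p)%:R.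
Proof. by rewrite coefB coefXn. Qed.

Lemma ifl_elim psi : is_filt_lambda psi ->
  [/\ good psi,
   (forall p q, prime p -> prime q ->
      cc psi p * (bb psi q * (bb psi q - 1)) = cc psi q * (bb psi p * (bb psi p - 1))),
   (2%:Z %| bb psi 2%N)%Z, (2%:Z %| cc psi 2%N - 1)%Z &
   (forall p, prime p -> p <> 2%N -> (p%:Z %| bb psi p)%Z /\ (p%:Z %| cc psi p)%Z)].
Proof.
move=> [hg [hc hm]].
split => //.
- move=> p q pp pq.
  have [s1 z1] := hg p pp; have [s2 z2] := hg q pq.
  have E := hc p q pp pq.
  have [_ a1 a2] := tr3_comp s2 z1.
  have [_ b1 b2] := tr3_comp s1 z2.
  have F2 := congr1 (fun q : {poly int} => q`_2) E.
  rewrite /= a2 b2 in F2. lia.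
- by have := hm 2%N isT 1%N isT; rewrite coefXp_sub /= subr0.
- by have := hm 2%N isT 2%N isT; rewrite coefXp_sub.
- move=> p pp p2.
  have p3 : (2 < p)%N by have := prime_gt1 pp; lia.
  have := hm p pp 1%N isT; have := hm p pp 2%N isT.
  rewrite !coefXp_sub.
  have -> : (2 == p) = false by apply/eqP; lia.
  have -> : (1 == p) = false by apply/eqP; lia.
  by rewrite !subr0 => -> ->.
Qed.

Lemma ifl_intro psi : good psi ->
   (forall p q, prime p -> prime q ->
      cc psi p * (bb psi q * (bb psi q - 1)) = cc psi q * (bb psi p * (bb psi p - 1))) ->
   (2%:Z %| bb psi 2%N)%Z -> (2%:Z %| cc psi 2%N - 1)%Z ->
   (forall p, prime p -> p <> 2%N -> (p%:Z %| bb psi p)%Z /\ (p%:Z %| cc psi p)%Z) ->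
   is_filt_lambda psi.
Proof.
move=> hg hc h2b h2c hp.
split => //; split.
- move=> p q pp pq.
  have [s1 z1] := hg p pp; have [s2 z2] := hg q pq.
  have [a0 a1 a2] := tr3_comp s2 z1.
  have [b0 b1 b2] := tr3_comp s1 z2.
  have E := hc p q pp pq.
  apply: eq3; try exact: size_tr3.
  + by rewrite a0 b0 z1 z2.
  + by rewrite a1 b1 mulrC.
  + rewrite a2 b2; lia.
- move=> p pp i hi.
  have [s1 z1] := hg p pp.
  rewrite coefXp_sub.
  case: (eqVneq p 2%N) => [E2|p2].
  + subst p.
    case: i hi => [|[|[|i]]] hi //=.
    * by rewrite z1 subr0.
    * by rewrite subr0.
  + have p3 : (2 < p)%N by have := prime_gt1 pp; have := p2; move/eqP; lia.
    have -> : (i == p) = false by apply/eqP; lia.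
    rewrite subr0.
    have p2n : p <> 2%N by apply/eqP.
    have [hb hc'] := hp p pp p2n.
    case: i hi => [|[|[|i]]] hi //=.
    by rewrite z1.
Qed.
Set Implicit Arguments. Unset Strict Implicit.

Lemma dvd_theta p m (x : int) : prime p -> x != 0 ->
  (((p ^ m)%N)%:Z %| x)%Z = (m <= theta p x)%N.
Proof.
by move=> pp x0; rewrite dvdzE absz_nat /theta pfactor_dvdn // absz_gt0.
Qed.

Lemma dvdz_sub1 (d x : int) : (d %| x)%Z -> (d %| x - 1)%Z -> `|d|%N = 1%N.
Proof.
move=> h1 h2; apply/eqP; rewrite -dvdz1.
have E : x - (x - 1) = 1%:Z by ring.
by rewrite -E; apply: rpredB.
Qed.

Lemma coprime_pm p m (y : int) : prime p -> ~~ (p%:Z %| y)%Z -> coprimez ((p ^ m)%N%:Z) y.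
Proof.
move=> pp h; rewrite coprimezE absz_nat; apply: coprimeXl.
by rewrite prime_coprime // -(absz_nat p) -dvdzE.
Qed.

Lemma val_a p m (x : int) : prime p -> (p%:Z %| x)%Z ->
  (((p ^ m)%N)%:Z %| x * (x - 1))%Z = (((p ^ m)%N)%:Z %| x)%Z.
Proof.
move=> pp hx; rewrite Gauss_dvdzl //; apply: coprime_pm => //.
apply/negP => h; have := dvdz_sub1 hx h; rewrite absz_nat => p1.
by rewrite p1 in pp.
Qed.

Lemma gauss_pm p m (al G : int) : prime p -> ~~ (p%:Z %| al)%Z ->
  (((p ^ m)%N)%:Z %| al * G)%Z -> (((p ^ m)%N)%:Z %| G)%Z.
Proof. by move=> pp h; rewrite Gauss_dvdzr //; apply: coprime_pm. Qed.

Lemma a_ne0 (p : nat) (x : int) : prime p -> (p%:Z %| x)%Z -> x != 0 -> x * (x - 1) != 0.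
Proof.
move=> pp hx x0; rewrite mulf_neq0 //; apply/negP => /eqP e.
have x1 : x = 1 by lia.
rewrite x1 dvdzE /= dvdn1 in hx.
by move/eqP: hx => hx; rewrite hx in pp.
Qed.

Lemma dvd_self_theta p (x : int) : prime p -> x != 0 -> (((p ^ theta p x)%N)%:Z %| x)%Z.
Proof. by move=> pp x0; rewrite dvd_theta. Qed.

Lemma gcd_ne0 b G : is_gcd_all b G -> b 2 * (b 2 - 1) != 0 -> G != 0.
Proof.
move=> [G0 hG _] ne; apply/negP => /eqP e.
have := hG 2%N isT; rewrite e dvdzE /= dvd0n absz_eq0.
by move/eqP => h; rewrite h eqxx in ne.
Qed.

Lemma gcd_gt0 b G : is_gcd_all b G -> b 2 * (b 2 - 1) != 0 -> 0 < G.
Proof.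
move=> h ne; have := gcd_ne0 h ne; case: h => G0 _ _; lia.
Qed.

Lemma alphaK b G p : is_gcd_all b G -> prime p ->
  divz (b p * (b p - 1)) G * G = b p * (b p - 1).
Proof. by move=> [_ hG _] pp; apply: divzK; apply: hG. Qed.

Lemma pat b G p : is_gcd_all b G -> prime p -> (p%:Z %| b p)%Z -> b p != 0 ->
  (((p ^ theta p (b p))%N)%:Z %| G)%Z -> ~~ (p%:Z %| divz (b p * (b p - 1)) G)%Z.
Proof.
move=> hg pp hp b0 hG; apply/negP => hal.
have : (((p ^ (theta p (b p)).+1)%N)%:Z %| b p * (b p - 1))%Z.
  by rewrite -(alphaK hg pp) expnS PoszM; apply: dvdz_mul.
by rewrite val_a // dvd_theta // ltnn.
Qed.

Lemma pow_G b G p m : is_gcd_all b G ->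
  (forall q, prime q -> (((p ^ m)%N)%:Z %| b q * (b q - 1))%Z) -> (((p ^ m)%N)%:Z %| G)%Z.
Proof. by move=> [_ _ h] H; apply: h. Qed.

Lemma theta_a b p : prime p -> (p%:Z %| b p)%Z -> b p != 0 ->
  theta p (b p) = theta p (b p * (b p - 1)).
Proof.
move=> pp hp b0; have a0 := a_ne0 pp hp b0.
apply/eqP; rewrite eqn_leq; apply/andP; split.
- by rewrite -dvd_theta //; apply: dvdz_mulr; apply: dvd_self_theta.
- by rewrite -dvd_theta // -(val_a _ pp hp); apply: dvd_self_theta.
Qed.

Lemma condB_cons b G p : is_gcd_all b G -> prime p ->
  (forall q, prime q -> (q%:Z %| b q)%Z) -> condB b p ->
  (p%:Z %| G)%Z /\ ~~ (p%:Z %| divz (b p * (b p - 1)) G)%Z.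
Proof.
move=> hg pp hdiv [b0 [hle _]].
have hG : (((p ^ theta p (b p))%N)%:Z %| G)%Z.
  apply: pow_G hg _ => q pq.
  case: (eqVneq (b q) 0) => [->|bq0]; first by rewrite mul0r dvdz0.
  by rewrite dvd_theta //; [apply: hle | apply: a_ne0 (hdiv q pq) bq0].
split; last exact: pat hg pp (hdiv p pp) b0 hG.
apply: dvdz_trans hG.
have h1 : (1 <= theta p (b p))%N by rewrite -dvd_theta // expn1; apply: hdiv.
by rewrite dvdzE !absz_nat; apply: dvdn_exp h1 (dvdnn p).
Qed.

Lemma prime_2_or_odd p : prime p -> p = 2%N \/ odd p.
Proof.
move=> pp; case: (even_prime pp) => ?; [by left | by right].
Qed.

Lemma T2 b G : condA b -> is_gcd_all b G -> ~~ (2%:Z %| divz (b 2%N * (b 2%N - 1)) G)%Z.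
Proof.
move=> [b20 hdiv h2] hg.
apply: (@pat b G 2%N hg isT (hdiv 2%N isT) b20).
apply: pow_G hg _ => q pq.
case: (prime_2_or_odd pq) => [->|oq]; last exact: h2.
by apply: dvdz_mulr; apply: dvd_self_theta.
Qed.

Lemma notB b G p : is_gcd_all b G -> prime p ->
  (forall q, prime q -> (q%:Z %| b q)%Z) -> b p != 0 -> ~ condB b p ->
  (p%:Z %| divz (b p * (b p - 1)) G)%Z.
Proof.
move=> hg pp hdiv b0 nB.
case: (boolP (p%:Z %| divz (b p * (b p - 1)) G)%Z) => // hal.
exfalso; apply: nB; split => //; split.
- move=> q pq bq0.
  have hG : (((p ^ theta p (b p))%N)%:Z %| G)%Z.
    apply: (gauss_pm pp hal); rewrite (alphaK hg pp).
    by apply: dvdz_mulr; apply: dvd_self_theta.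
  rewrite -dvd_theta //; last exact: a_ne0 (hdiv q pq) bq0.
  apply: (dvdz_trans hG); case: hg => _ h _; exact: h.
- by exists p; split => //; exact: (theta_a pp (hdiv p pp) b0).
Qed.

Definition decb (P : Prop) : bool :=
  if excluded_middle_informative P then true else false.

Lemma decbP (P : Prop) : decb P <-> P.
Proof. by rewrite /decb; case: excluded_middle_informative. Qed.

Lemma dvdzn (e : nat) (x : int) : (e%:Z %| x)%Z = (e %| `|x|)%N.
Proof. by rewrite dvdzE absz_nat. Qed.

Lemma gcd_exists b : b 2%N * (b 2%N - 1) != 0 -> exists G, is_gcd_all b G.
Proof.
move=> ne.
pose P (e : nat) := forall q, prime q -> (e%:Z %| b q * (b q - 1))%Z.
have P1 : decb (P 1%N) by apply/decbP => q _; apply: dvd1z.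
have ub : forall i, decb (P i) -> (i <= absz (b 2%N * (b 2%N - 1))%R)%N.
  move=> i /decbP Pi; have := Pi 2%N isT; rewrite dvdzn => h.
  by apply: dvdn_leq h; rewrite absz_gt0.
case: (ex_maxnP (ex_intro _ 1%N P1) ub) => G0 /decbP PG0 maxG.
have G0pos : (0 < G0)%N by apply: maxG.
exists G0%:Z; split => //.
move=> e he.
have e0 : (0 < `|e|)%N.
  rewrite absz_gt0; apply/negP => /eqP e0; move: (he 2%N isT).
  by rewrite e0 dvdzE /= dvd0n absz_eq0 (negbTE ne).
pose L := lcmn `|e| G0.
have PL : decb (P L).
  apply/decbP => q pq; rewrite /L dvdz_lcm; apply/andP; split.
  - by rewrite dvdzn -dvdzE; apply: he.
  - exact: PG0.
have LG : (L <= G0)%N by apply: maxG.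
have GL : (G0 <= L)%N.
  by apply: dvdn_leq; [rewrite lcmn_gt0 e0 | apply: dvdn_lcmr].
have -> : G0 = L by apply/eqP; rewrite eqn_leq LG GL.
by rewrite dvdzE absz_nat; apply: dvdn_lcml.
Qed.

Lemma t_exists b c G : is_gcd_all b G -> b 2%N * (b 2%N - 1) != 0 ->
  (forall p, prime p -> c p * (b 2%N * (b 2%N - 1)) = c 2%N * (b p * (b p - 1))) ->
  exists t, forall p, prime p -> c p = t * divz (b p * (b p - 1)) G.
Proof.
move=> hg ne hc.
set a2 := b 2%N * (b 2%N - 1) in ne hc *.
have G0 := gcd_ne0 hg ne.
pose g := gcdz a2 (c 2%N).
have g0 : (g != 0) by rewrite /g gcdz_eq0 negb_and ne.
have ga : (g %| a2)%Z by apply: dvdz_gcdl.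
pose D := divz a2 g.
have aD : D * g = a2 by apply: divzK.
have D0 : D != 0 by apply/negP => /eqP e; move: ne; rewrite -aD e mul0r eqxx.
have hD : forall p, prime p -> (D %| b p * (b p - 1))%Z.
  move=> p pp; rewrite -(@dvdz_mul2r g D (b p * (b p - 1)) g0) aD.
  have h1 : (a2 %| gcdz (a2 * (b p * (b p - 1))) (c 2%N * (b p * (b p - 1))))%Z.
    rewrite dvdz_gcd; apply/andP; split; first by apply: dvdz_mulr.
    by rewrite -hc //; apply: dvdz_mull.
  rewrite -mulz_gcdl in h1.
  move: h1; rewrite !dvdzE !abszM !absz_nat => h1; rewrite [X in (_ %| X)%N]mulnC; exact: h1.
have DG : (D %| G)%Z by case: hg => _ _ h; apply: h.
have aG := alphaK hg (isT : prime 2).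
set al2 := divz a2 G in aG.
have Ge : divz G D * D = G by apply: divzK.
have al2g : (al2 %| g)%Z.
  apply/dvdzP; exists (divz G D).
  apply: (mulIf D0); rewrite [g * D]mulrC aD /a2 -aG -{1}Ge; ring.
have al2c : (al2 %| c 2%N)%Z by apply: dvdz_trans al2g (dvdz_gcdr _ _).
exists (divz (c 2%N) al2) => p pp.
have al20 : al2 * G != 0 by rewrite aG.
apply: (mulIf al20).
have E := hc p pp; rewrite /a2 -aG -{1}(alphaK hg pp) in E.
rewrite E -{1}(divzK al2c); ring.
Qed.

Arguments iso_elim {d psi1 psi2}.
Arguments iso_intro {d psi1 psi2}.
Arguments ifl_elim {psi}.
Arguments ifl_intro {psi}.

Lemma Sc_coef c p : [/\ (size (S_c c p) <= 3)%N, (S_c c p)`_0 = 0,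
  (S_c c p)`_1 = 0 & (S_c c p)`_2 = c p].
Proof.
rewrite /S_c; split; rewrite ?coefCM ?coefXn ?mulr0 ?mulr1 //.
by apply: size_le3 => i hi; rewrite coefCM coefXn; case: eqP => [E|]; [lia | rewrite mulr0].
Qed.

Lemma Sc_good c : good (S_c c).
Proof. by move=> p _; have [] := Sc_coef c p. Qed.

Lemma Sbk_coef b k G p : [/\ (size (S_bk b k G p) <= 3)%N, (S_bk b k G p)`_0 = 0,
  (S_bk b k G p)`_1 = b p & (S_bk b k G p)`_2 = divz (k * (b p * (b p - 1))) G].
Proof.
rewrite /S_bk; split; rewrite ?coefD ?coefCM ?coefXn ?coefX ?mulr0 ?mulr1 ?addr0 ?add0r //.
apply: size_le3 => i hi; rewrite coefD !coefCM coefXn coefX.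
have -> : (i == 1%N) = false by apply/eqP; lia.
have -> : (i == 2%N) = false by apply/eqP; lia.
by rewrite !mulr0 addr0.
Qed.

Lemma Sbk_good b k G : good (S_bk b k G).
Proof. by move=> p _; have [] := Sbk_coef b k G p. Qed.

Lemma part2 c : condC c -> is_filt_lambda (S_c c).
Proof.
move=> [c2 cp]; apply: ifl_intro; first exact: Sc_good.
- by move=> p q _ _; have [_ _ -> _] := Sc_coef c p; have [_ _ -> _] := Sc_coef c q; rewrite !mul0r !mulr0.
- by have [_ _ -> _] := Sc_coef c 2; rewrite dvdz0.
- have [_ _ _ ->] := Sc_coef c 2; move: c2; lia.
- move=> p pp p2; have [_ _ -> ->] := Sc_coef c p; split; first exact: dvdz0.
  apply: cp => //; have := prime_gt1 pp; lia.
Qed.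

Lemma part3 d c c' : (1 <= d)%N -> condC c -> condC c' ->
  (flr_iso d (S_c c) (S_c c') <->
   ((forall p, prime p -> c p = c' p) \/ (forall p, prime p -> c p = - c' p))).
Proof.
move=> hd _ _; split.
- move=> /(iso_elim hd (Sc_good c) (Sc_good c')) [u [v [hu hp]]].
  case: hu => U; [left | right] => p pp; have [_ h] := hp p pp;
    move: h; have [_ _ -> ->] := Sc_coef c p; have [_ _ _ ->] := Sc_coef c' p; rewrite U; lia.
- case=> h.
  + apply: (@iso_intro d _ _ 1 0 (Sc_good c) (Sc_good c')); first by left.
    move=> p pp; have [_ _ -> ->] := Sc_coef c p; have [_ _ -> ->] := Sc_coef c' p.
    by rewrite h // mul1r mul0r addr0.
  + apply: (@iso_intro d _ _ (-1) 0 (Sc_good c) (Sc_good c')); first by right.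
    move=> p pp; have [_ _ -> ->] := Sc_coef c p; have [_ _ -> ->] := Sc_coef c' p.
    by rewrite h // mul0r addr0 mulN1r.
Qed.

Lemma part6 d c b k G : (1 <= d)%N -> condA b -> ~ flr_iso d (S_c c) (S_bk b k G).
Proof.
move=> hd [b20 _ _] /(iso_elim hd (Sc_good c) (Sbk_good b k G)) [u [v [_ hp]]].
have [h _] := hp 2%N isT; move: h; have [_ _ -> _] := Sc_coef c 2; have [_ _ -> _] := Sbk_coef b k G 2.
by move=> E; rewrite -E eqxx in b20.
Qed.

Lemma alpha_form b G p : is_gcd_all b G -> prime p ->
  exists al, b p * (b p - 1) = al * G /\ divz (b p * (b p - 1)) G = al.
Proof. by move=> hg pp; exists (divz (b p * (b p - 1)) G); rewrite (alphaK hg pp). Qed.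

Lemma Sbk2 b k G p : is_gcd_all b G -> prime p -> b 2%N * (b 2%N - 1) != 0 ->
  (S_bk b k G p)`_2 = k * divz (b p * (b p - 1)) G.
Proof.
move=> hg pp ne; have [_ _ _ ->] := Sbk_coef b k G p.
have [al [E1 E2]] := alpha_form hg pp.
rewrite E2 E1 mulrA mulzK //; exact: gcd_ne0 hg ne.
Qed.

Lemma condA_ne b : condA b -> b 2%N * (b 2%N - 1) != 0.
Proof. by move=> [b20 hd _]; apply: (a_ne0 (p:=2%N)) => //; apply: hd. Qed.

Lemma odd_mul (x y : int) : ~~ (2%:Z %| x)%Z -> ~~ (2%:Z %| y)%Z -> ~~ (2%:Z %| x * y)%Z.
Proof.
move=> hx hy; rewrite Gauss_dvdzr //.
by rewrite coprimezE absz_nat prime_coprime // -(absz_nat 2) -dvdzE.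
Qed.

Lemma part4 b k G : condA b -> is_gcd_all b G -> condK b G k -> is_filt_lambda (S_bk b k G).
Proof.
move=> hA hg [k2 k1 kG kB].
have ne := condA_ne hA.
have hA' := hA; case: hA' => [b20 hdiv h2].
apply: ifl_intro; first exact: Sbk_good.
- move=> p q pp pq; rewrite !Sbk2 //; have [_ _ -> _] := Sbk_coef b k G p;
    have [_ _ -> _] := Sbk_coef b k G q.
  have [ap [Ep Dp]] := alpha_form hg pp; have [aq [Eq Dq]] := alpha_form hg pq.
  rewrite Dp Dq Ep Eq; ring.
- by have [_ _ -> _] := Sbk_coef b k G 2; apply: hdiv.
- rewrite Sbk2 //; have := odd_mul k2 (T2 hA hg); lia.
- move=> p pp p2; rewrite Sbk2 //; have [_ _ -> _] := Sbk_coef b k G p.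
  split; first exact: hdiv.
  case: (eqVneq (b p) 0) => [->|bp0]; first by rewrite mul0r div0z mulr0 dvdz0.
  have op : odd p by case: (prime_2_or_odd pp).
  case: (excluded_middle_informative (condB b p)) => hB.
  + by apply: dvdz_mulr; apply: kB.
  + by apply: dvdz_mull; apply: notB.
Qed.

Lemma gcd_unique b b' G G' : is_gcd_all b G -> is_gcd_all b' G' ->
  (forall p, prime p -> b p = b' p) -> G = G'.
Proof.
move=> [G0 hG mG] [G0' hG' mG'] hb.
have h1 : (G %| G')%Z by apply: mG' => p pp; rewrite -hb //; apply: hG.
have h2 : (G' %| G)%Z by apply: mG => p pp; rewrite hb //; apply: hG'.
rewrite dvdzE in h1; rewrite dvdzE in h2.
have : absz G = absz G' by apply/eqP; rewrite eqn_dvd h1 h2.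
lia.
Qed.

Lemma part5 d b b' k G k' G' : (1 <= d)%N ->
  condA b -> is_gcd_all b G -> condK b G k ->
  condA b' -> is_gcd_all b' G' -> condK b' G' k' ->
  (flr_iso d (S_bk b k G) (S_bk b' k' G') <->
   ((forall p, prime p -> b p = b' p) /\ k = k')).
Proof.
move=> hd hA hg [_ k1 kG _] hA' hg' [_ k1' kG' _].
have ne := condA_ne hA; have ne' := condA_ne hA'.
split.
- move=> /(iso_elim hd (Sbk_good b k G) (Sbk_good b' k' G')) [u [v [hu hp]]].
  have hb : forall p, prime p -> b p = b' p.
    by move=> p pp; have [h _] := hp p pp; move: h; have [_ _ -> _] := Sbk_coef b k G p;
      have [_ _ -> _] := Sbk_coef b' k' G' p.
  split => //.
  have eG := gcd_unique hg hg' hb.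
  have [_ h] := hp 2%N isT; move: h.
  rewrite !Sbk2 //; have [_ _ -> _] := Sbk_coef b k G 2%N.
  rewrite -!hb // -eG.
  have [al [E1 E2]] := alpha_form hg (isT : prime 2).
  rewrite E2.
  have al0 : al != 0 by apply/negP => /eqP a0; move: ne; rewrite E1 a0 mul0r eqxx.
  have -> : b 2%N * b 2%N - b 2%N = al * G by rewrite -E1; ring.
  move=> E.
  have E' : (k - u * k' - v * G) * al = 0 by rewrite !mulrBl E; ring.
  move/eqP: E'; rewrite mulf_eq0 (negbTE al0) orbF subr_eq0 => /eqP E''.
  rewrite -eG in kG'.
  have G0 : 0 <= G by lia.
  case: hu => U; rewrite U in E''; (have [v0|[v0|v0]] : v = 0 \/ 1 <= v \/ v <= -1 by lia); [subst v; lia | nia | nia | subst v; lia | nia | nia].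
- case=> hb <-.
  have eG := gcd_unique hg hg' hb; subst G'.
  apply: (@iso_intro d _ _ 1 0 (Sbk_good b k G) (Sbk_good b' k G)); first by left.
  move=> p pp; have [_ _ -> ->] := Sbk_coef b k G p; have [_ _ -> ->] := Sbk_coef b' k G p.
  by rewrite hb // mul1r mul0r addr0.
Qed.

Lemma two_dvd_a (x : int) : (2%:Z %| x * (x - 1))%Z.
Proof.
case: (boolP (2%:Z %| x)%Z) => h; first exact: dvdz_mulr.
by apply: dvdz_mull; move: h; lia.
Qed.

Lemma part1 d psi : (1 <= d)%N -> is_filt_lambda psi ->
     (exists c : nat -> int, condC c /\ flr_iso d psi (S_c c)) \/
     (exists (b : nat -> int) (k G : int),
        [/\ condA b, is_gcd_all b G, condK b G k & flr_iso d psi (S_bk b k G)]).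
Proof.
move=> hd H; have [hgood hc h2b h2c hp] := ifl_elim H.
pose b p := bb psi p; pose c p := cc psi p.
have hdiv : forall q, prime q -> (q%:Z %| b q)%Z.
  move=> q pq; case: (eqVneq q 2%N) => [->|q2]; first exact: h2b.
  by have [] := hp q pq (elimN eqP q2).
have c20 : c 2%N != 0 by apply/negP => /eqP e; move: h2c; rewrite /c in e; rewrite e; lia.
case: (eqVneq (b 2%N) 0) => b20.
- left; exists c; split.
  + split; first by move: h2c; rewrite /c; lia.
    by move=> p pp p2; have [] := hp p pp; [lia|].
  + have hb0 : forall p, prime p -> b p = 0.
      move=> p pp; case: (eqVneq (b p) 0) => // bp0; exfalso.
      have := hc 2%N p isT pp; rewrite -/(b 2%N) b20 mul0r mulr0.
      move/eqP; rewrite mulf_eq0 (negbTE c20) /=.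
      by rewrite (negbTE (a_ne0 pp (hdiv p pp) bp0)).
    apply: (@iso_intro d _ _ 1 0 hgood (Sc_good c)); first by left.
    move=> p pp; have [_ _ -> ->] := Sc_coef c p.
    by rewrite -/(b p) hb0 // mul1r mul0r addr0.
- right.
  have ne : b 2%N * (b 2%N - 1) != 0 by apply: a_ne0 (hdiv 2%N isT) b20.
  have hA : condA b.
    split => // p pp op.
    have h := hc p 2%N pp isT; rewrite -/(b 2%N) -/(b p) -/(c p) -/(c 2%N) in h.
    apply: (@gauss_pm 2%N _ (c 2%N)) => //.
      by move: h2c; rewrite /c; lia.
    rewrite -h; apply: dvdz_mull; apply: dvdz_mulr; exact: dvd_self_theta.
  have [G hg] := gcd_exists ne.
  have [t ht] : exists t, forall p, prime p -> c p = t * divz (b p * (b p - 1)) G.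
    apply: t_exists hg ne _ => p pp; exact: hc p 2%N pp isT.
  have Gpos := gcd_gt0 hg ne.
  have G0 : G != 0 by lia.
  have G2 : (2%:Z %| G)%Z by case: hg => _ _ m; apply: m => q _; apply: two_dvd_a.
  have todd : ~~ (2%:Z %| t)%Z.
    apply/negP => t2; move: h2c; rewrite -/(c 2%N) ht //.
    have : (2%:Z %| t * divz (b 2%N * (b 2%N - 1)) G)%Z by apply: dvdz_mulr.
    lia.
  pose q := divz t G; pose r := modz t G.
  have tE : t = q * G + r by apply: divz_eq.
  have r0 : 0 <= r by apply: modz_ge0.
  have rG : r < G by apply: ltz_pmod.
  have qG2 : (2%:Z %| q * G)%Z by apply: dvdz_mull.
  have rodd : ~~ (2%:Z %| r)%Z by move: todd qG2; rewrite tE; lia.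
  have main : forall (u v k : int), (u = 1 \/ u = -1) -> t = u * k + v * G ->
      ~~ (2%:Z %| k)%Z -> 1 <= k -> 2 * k <= G ->
      exists (b0 : nat -> int) (k0 G0 : int),
        [/\ condA b0, is_gcd_all b0 G0, condK b0 G0 k0 & flr_iso d psi (S_bk b0 k0 G0)].
    move=> u v k hu tk k2 k1 kG; exists b, k, G; split => //.
    + split => // p pp op hB.
      have [pG nal] := condB_cons hg pp hdiv hB.
      have pt : (p%:Z %| t)%Z.
        have h := gauss_pm (m:=1%N) pp nal; rewrite expn1 in h; apply: h.
        by rewrite mulrC -ht //; have [] := hp p pp; [have := prime_gt1 pp; lia|].
      have -> : k = u * (t - v * G) by case: hu => U; rewrite tk U; ring.
      by apply: dvdz_mull; apply: rpredB => //; apply: dvdz_mull.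
    + apply: (@iso_intro d _ _ u v hgood (Sbk_good b k G)) => // p pp.
      have [_ _ -> _] := Sbk_coef b k G p; split => //.
      rewrite Sbk2 // -/(c p) ht //.
      have [al [E1 E2]] := alpha_form hg pp.
      rewrite E2 -/(b p) (_ : b p * b p - b p = al * G); last by rewrite -E1; ring.
      by rewrite tk; case: hu => ->; ring.
  case: (leP (2 * r) G) => hr.
  + apply: (main 1 q r) => //; [by left | by rewrite tE; ring | by move: rodd; lia].
  + apply: (main (-1) (q + 1) (G - r)) => //; [by right | by rewrite tE; ring | | lia | lia].
    by move: rodd G2; lia.
Qed.

Unset Implicit Arguments.

Theorem theorem1p3 (d : nat) (hd : (1 <= d)%N) :
  (forall psi : nat -> {poly int}, is_filt_lambda psi ->
     (exists c : nat -> int, condC c /\ flr_iso d psi (S_c c)) \/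
     (exists (b : nat -> int) (k G : int),
        [/\ condA b, is_gcd_all b G, condK b G k & flr_iso d psi (S_bk b k G)]))
  /\ (forall c : nat -> int, condC c -> is_filt_lambda (S_c c))
  /\ (forall c c' : nat -> int, condC c -> condC c' ->
        (flr_iso d (S_c c) (S_c c') <->
         ((forall p, prime p -> c p = c' p) \/ (forall p, prime p -> c p = - c' p))))
  /\ (forall (b : nat -> int) (k G : int), condA b -> is_gcd_all b G -> condK b G k ->
        is_filt_lambda (S_bk b k G))
  /\ (forall (b b' : nat -> int) (k G k' G' : int),
        condA b -> is_gcd_all b G -> condK b G k ->
        condA b' -> is_gcd_all b' G' -> condK b' G' k' ->
        (flr_iso d (S_bk b k G) (S_bk b' k' G') <->
         ((forall p, prime p -> b p = b' p) /\ k = k')))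
  /\ (forall (c b : nat -> int) (k G : int), condC c ->
        condA b -> is_gcd_all b G -> condK b G k ->
        ~ flr_iso d (S_c c) (S_bk b k G)).
Proof.
split; first by move=> psi H; apply: part1.
split; first exact: part2.
split; first by move=> c c' hc hc'; apply: part3.
split; first exact: part4.
split; first by move=> b b' k G k' G' hA hg hk hA' hg' hk'; apply: part5.
by move=> c b k G _ hA _ _; apply: part6.
Qed.
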